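(* Let $m$ be an odd positive integer with $m\not\equiv 1\pmod 8$, and let $\ell=\lceil\log_2 m\rceil$. Then $\mathfrak K(m)<\left(1+\frac{37}{m}\right)2^\ell$.
   Context: The Thue–Morse word is $\mathbf t=\mathbf t_1\mathbf t_2\cdots$ where $\mathbf t_i\in\{0,1\}$ has the parity of the number of $1$'s in the binary expansion of $i-1$. For positive integers $\alpha\le\beta$, $\langle\alpha,\beta\rangle=\mathbf t_\alpha\cdots\mathbf t_\beta$. A $k$-anti-power is a word $w_1\cdots w_k$ with $w_1,\dots,w_k$ pairwise distinct words of equal length. For a positive integer $m$, $\mathfrak K(m)$ is the smallest positive integer $k$ such that the prefix $\langle 1,km\rangle$ of $\mathbf t$ is not a $k$-anti-power. *)

(* Defs.v *)
From mathcomp Require Import all_boot.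
Set Implicit Arguments. Unset Strict Implicit. Unset Printing Implicit Defensive.

Fixpoint popcount_aux (fuel n : nat) : nat :=
  match fuel with
  | 0 => 0
  | f.+1 => if n == 0 then 0 else odd n + popcount_aux f n./2
  end.
Definition popcount (n : nat) : nat := popcount_aux n n.

(* Thue--Morse word, 1-indexed: t_i = parity of popcount (i-1) *)
Definition tm (i : nat) : bool := odd (popcount i.-1).

(* <alpha, beta> = t_alpha ... t_beta (for 1 <= alpha <= beta) *)
Definition tm_factor (alpha beta : nat) : seq bool :=
  mkseq (fun j => tm (alpha + j)) (beta.+1 - alpha).

(* the j-th block (j = 1..k) of length m of the prefix <1, k m> *)
Definition tm_block (m j : nat) : seq bool := tm_factor ((j.-1) * m).+1 (j * m).

Definition prefix_is_anti_power (k m : nat) : Prop :=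
  forall i j, 1 <= i <= k -> 1 <= j <= k -> i != j -> tm_block m i != tm_block m j.

Definition is_frakK (m k : nat) : Prop :=
  0 < k /\ ~ prefix_is_anti_power k m /\
  (forall k', 0 < k' < k -> prefix_is_anti_power k' m).

(* Main.v *)
Require Import Defs.
From mathcomp Require Import all_boot zify.
Set Implicit Arguments. Unset Strict Implicit. Unset Printing Implicit Defensive.

Definition t n := odd (popcount n).

Lemma pa_stable f g n : n <= f -> n <= g -> popcount_aux f n = popcount_aux g n.
Proof.
elim: f g n => [|f IH] [|g] n /=.
- by rewrite leqn0 => /eqP ->.
- by rewrite leqn0 => /eqP -> _.
- by rewrite leqn0 => _ /eqP ->.
case: (eqVneq n 0) => [->//|nz] hf hg.
congr (_ + _); apply: IH; lia.
Qed.

Lemma popcountE n : popcount n = odd n + popcount n./2.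
Proof.
rewrite /popcount; case: n => [//|n] /=.
congr (_ + _); apply: pa_stable; lia.
Qed.

Lemma t_half n : t n = odd n (+) t n./2.
Proof. by rewrite /t popcountE oddD oddb. Qed.

Lemma t_split k a b : b < 2 ^ k -> t (a * 2 ^ k + b) = t a (+) t b.
Proof.
elim: k a b => [|k IH] a b.
  by rewrite expn0 ltnS leqn0 muln1 => /eqP ->; rewrite addn0 /t addbF.
move=> hb.
have hc : a * 2 ^ k.+1 + b = odd b + (a * 2 ^ k + b./2).*2.
  rewrite expnS; have := odd_double_half b; lia.
rewrite hc t_half half_bit_double oddD odd_double addbF IH; last first.
  by rewrite ltn_half_double -mul2n -expnS.
by rewrite [t b]t_half oddb addbCA.
Qed.

Lemma t_split' k a z : t (a * 2 ^ k + z) = t (a + z %/ 2 ^ k) (+) t (z %% 2 ^ k).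
Proof.
rewrite -(@t_split k) ?ltn_pmod ?expn_gt0 //; congr t.
rewrite {1}(divn_eq z (2 ^ k)); lia.
Qed.

Lemma t_double n : t n.*2 = t n.
Proof. by rewrite t_half odd_double -(addn0 n.*2) -[0]/(false:nat) addnC half_bit_double. Qed.

Lemma blockE m j : 0 < j -> tm_block m j = mkseq (fun i => t (j.-1 * m + i)) m.
Proof.
move=> hj; rewrite /tm_block /tm_factor.
have -> : (j * m).+1 - (j.-1 * m).+1 = m.
  case: j hj => // j _ /=; rewrite mulSn; lia.
by apply: eq_mkseq => i; rewrite /tm addSn.
Qed.

Definition Win m E n := forall y, n * m %/ E <= y <= (n * m + m.-1) %/ E -> t (y + m) = t y.

Lemma block_eq m e n : 0 < m -> Win m (2 ^ e) n ->
  tm_block m n.+1 = tm_block m (n.+1 + 2 ^ e).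
Proof.
move=> hm hW; rewrite !blockE ?addSn //=.
apply: (@eq_from_nth _ false); rewrite !size_mkseq // => i hi.
rewrite !nth_mkseq //.
set E := 2 ^ e; have hE : 0 < E by rewrite expn_gt0.
set x := n * m + i.
have hx : x = x %/ E * E + x %% E by rewrite {1}(divn_eq x E).
have -> : (n + E) * m + i = (x %/ E + m) * E + x %% E.
  rewrite [(_ + m) * E]mulnDl addnAC -hx /x mulnDl [E * m]mulnC; lia.
rewrite /E t_split ?ltn_pmod // -/E.
rewrite hx /E t_split ?ltn_pmod // -/E.
rewrite -hx hW //.
apply/andP; split; apply: leq_div2r; rewrite /x; lia.
Qed.

Definition na m k := [exists i : 'I_k.+1, exists j : 'I_k.+1,
  (0 < i) && (0 < j) && (i != j :> nat) && (tm_block m i == tm_block m j)].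

Lemma anti_na m k : prefix_is_anti_power k m <-> ~~ na m k.
Proof.
split.
- move=> H; apply/negP => /existsP [i /existsP [j /andP[/andP[/andP[hi hj] hij] /eqP he]]].
  have := H i j; rewrite hi hj -ltnS ltn_ord -ltnS ltn_ord /= => /(_ isT isT hij).
  by rewrite he eqxx.
- move=> /negP hn i j /andP[hi hik] /andP[hj hjk] hij; apply/negP => /eqP he.
  apply: hn; apply/existsP; exists (Ordinal (hik : i < k.+1)).
  apply/existsP; exists (Ordinal (hjk : j < k.+1)) => /=.
  by rewrite hi hj hij he eqxx.
Qed.

Lemma final m i j : 0 < i -> i < j -> tm_block m i = tm_block m j ->
  exists k, is_frakK m k /\ k <= j.
Proof.
move=> hi hij he.
have hi' : i < j.+1 by lia.
have ex : exists k, na m k.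
  exists j; apply/existsP; exists (Ordinal hi').
  apply/existsP; exists (Ordinal (ltnSn j)) => /=.
  by rewrite hi (ltn_trans hi hij) neq_ltn hij he eqxx.
case: (ex_minnP ex) => k hk hmin.
exists k; split; last by apply: hmin; case: ex => j0 _; apply/existsP; exists (Ordinal hi');
  apply/existsP; exists (Ordinal (ltnSn j)) => /=; rewrite hi (ltn_trans hi hij) neq_ltn hij he eqxx.
split; [|split].
- case: k hk {hmin} => // /existsP [a /existsP [b]].
  by case: a => [[|a] ha] /=; [rewrite ltnn | ].
- by move/anti_na; rewrite hk.
- move=> k' /andP[_ hk']; apply/anti_na; apply/negP => hna.
  by have := hmin k' hna; rewrite leqNgt hk'.
Qed.

Definition Goal m := exists e n,
  (n.+1 + 2 ^ e) * m < (m + 37) * 2 ^ up_log 2 m /\ Win m (2 ^ e) n.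

Lemma goal_concl m : 0 < m -> Goal m ->
  exists k, is_frakK m k /\ k * m < (m + 37) * 2 ^ up_log 2 m.
Proof.
move=> hm [e [n [hs hw]]].
have hlt : n.+1 < n.+1 + 2 ^ e by rewrite -addn1 leq_add2l expn_gt0.
have [k [hk hkj]] := final (ltn0Sn n) hlt (block_eq hm hw).
exists k; split => //; apply: leq_ltn_trans hs; exact: leq_mul.
Qed.

Lemma lo_bound A B C D : 0 < C -> 0 < D -> A * D <= B * C -> A %/ C <= B %/ D.
Proof.
move=> hC hD h; rewrite leq_divRL //.
have h1 : A %/ C * C <= A by rewrite leq_trunc_div.
rewrite -(leq_pmul2r hC); apply: leq_trans h.
by rewrite mulnAC leq_mul2r h1 orbT.
Qed.

Lemma hi_bound X Y L q : 0 < L -> 0 < q -> 0 < X -> X * q <= Y * L ->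
  X.-1 %/ L <= Y.-1 %/ q.
Proof.
move=> hL hq hX h; rewrite leq_divRL //.
set h0 := X.-1 %/ L.
have h1 : h0 * L <= X.-1 by rewrite leq_trunc_div.
have h2 : h0 * q * L < Y * L.
  rewrite mulnAC; apply: leq_trans h; rewrite ltn_pmul2r //; lia.
rewrite ltn_pmul2r // in h2; lia.
Qed.

Definition mt (base z : nat) (b0 b1 : bool) : option bool :=
  if z < base then Some (b0 (+) t z)
  else if z < base.*2 then Some (b1 (+) t (z - base)) else None.

Lemma mt_ok k v z b : mt (2 ^ k) z (t v) (t v.+1) = Some b -> t (v * 2 ^ k + z) = b.
Proof.
rewrite /mt; case: ifP => h1.
  by case=> <-; rewrite t_split.
case: ifP => // h2 [<-].
have -> : v * 2 ^ k + z = v.+1 * 2 ^ k + (z - 2 ^ k) by rewrite mulSn; lia.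
by rewrite t_split //; lia.
Qed.

Definition DAz d b0 b1 y := mt 128 (d + y) b0 b1 == Some (t y).
Definition DBz d b0 b1 x :=
  match mt 128 (d + x) b0 b1 with Some u => mt 256 (d.*2 + x) b0 b1 == Some u | None => false end.

Definition allr lo hi (P : pred nat) := all P (index_iota lo hi.+1).

Lemma allrP lo hi P : allr lo hi P -> forall y, lo <= y <= hi -> P y.
Proof. by move=> /allP H y hy; apply: H; rewrite mem_index_iota ltnS. Qed.

Definition opt p1 q1 p2 q2 d b0 b1 := has (fun n =>
  ((n.+1 * p2 < 37 * q2) &&
     (allr (n * p1 %/ q1) ((n.+1 * p2).-1 %/ q2) (DAz d b0 b1)
      || allr (n.*2 * p1 %/ q1) ((n.+1.*2 * p2).-1 %/ q2) (DBz d b0 b1)))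
  || ((n < 127) && allr (n.*2 * p1 %/ q1) ((n.+1.*2 * p2).-1 %/ q2) (DAz d b0 b1)))
  (iota 0 200).

Lemma hasP_nat (p : pred nat) s : has p s -> exists n : nat, p n.
Proof. by case/hasP => x _ px; exists x. Qed.

Section Sound.
Variables (m v d l : nat).
Hypothesis hmv : m = v * 128 + d.
Hypothesis hl : l = up_log 2 m.
Hypothesis hL : 256 <= 2 ^ l.

Lemma l_pos : 0 < l.
Proof. case: l hL => //. Qed.

Lemma LP : 2 ^ l = (2 ^ l.-1).*2.
Proof. by rewrite -mul2n -expnS prednK // l_pos. Qed.

Lemma m_pos : 0 < m.
Proof.
case: (posnP m) => // hm0; move: hL; rewrite hl hm0 up_log0 //.
Qed.

Lemma opt_sound p1 q1 p2 q2 : 0 < q1 -> 0 < q2 ->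
  p1 * 2 ^ l <= m * q1 -> m * q2 <= p2 * 2 ^ l ->
  opt p1 q1 p2 q2 d (t v) (t v.+1) -> Goal m.
Proof.
move=> hq1 hq2 hlo hhi /hasP_nat [n H].
have hm := m_pos; have hl0 := l_pos.
have LPe := LP.
set L := 2 ^ l in hlo hhi LPe *; set P := 2 ^ l.-1 in LPe *.
have hL0 : 0 < L by rewrite /L expn_gt0.
have hP0 : 0 < P by rewrite /P expn_gt0.
have hup : up_log 2 m = l by [].
have sl : n.+1 * p2 < 37 * q2 -> n.+1 * m < 37 * L.
  move=> hs; rewrite -(ltn_pmul2r hq2).
  apply: (@leq_ltn_trans (n.+1 * (p2 * L))); first by rewrite -mulnA leq_mul2l hhi orbT.
  have := hs; rewrite -(ltn_pmul2r hL0); timeout 10 nia.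
have slB : n.+1 * m < 37 * L -> ((P + n).+1 + P) * m < (m + 37) * L.
  rewrite LPe; timeout 20 nia.
have slC : n < 127 -> (n.+1 + P) * m < (m + 37) * L.
  move: hL; rewrite -/L LPe => hL' hn; timeout 20 nia.
have hm1 : n * m + m.-1 = (n.+1 * m).-1 by rewrite mulSn; timeout 10 lia.
have xlo : n.*2 * p1 %/ q1 <= n * m %/ P.
  apply: lo_bound => //.
  have : n * (p1 * L) <= n * (m * q1) by rewrite leq_mul2l hlo orbT.
  rewrite LPe; timeout 10 lia.
have xhi : (n * m + m.-1) %/ P <= (n.+1.*2 * p2).-1 %/ q2.
  rewrite hm1; apply: hi_bound => //; first by rewrite muln_gt0.
  have : n.+1 * (m * q2) <= n.+1 * (p2 * L) by rewrite leq_mul2l hhi orbT.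
  rewrite LPe; timeout 10 lia.
have xwin : forall x, n * m %/ P <= x <= (n * m + m.-1) %/ P ->
    n.*2 * p1 %/ q1 <= x <= (n.+1.*2 * p2).-1 %/ q2.
  by move=> x /andP[a b]; rewrite (leq_trans xlo a) (leq_trans b xhi).
have DAok : forall y, DAz d (t v) (t v.+1) y -> t (y + m) = t y.
  move=> y /eqP /(@mt_ok 7) <-; congr t; rewrite hmv; timeout 10 lia.
case/orP: H => [/andP [hs /orP [hA | hB]] | /andP [hn hC]].
- exists l, n; split.
    rewrite hup mulnDl -/L; have := sl hs; timeout 10 lia.
  move=> y /andP [h1 h2]; apply: DAok; apply: (allrP hA); apply/andP; split.
    apply: leq_trans h1; apply: lo_bound => //.
    by rewrite -!mulnA leq_mul2l hlo orbT.
  apply: (leq_trans h2); rewrite hm1; apply: hi_bound => //; first by rewrite muln_gt0.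
  by rewrite -!mulnA leq_mul2l hhi orbT.
- exists l.-1, (P + n); split.
    by rewrite hup -/P; apply: slB; apply: sl.
  move=> y; rewrite -/P mulnDl (mulnC P m) -addnA !divnMDl // => /andP [h1 h2].
  have hy : y = m + (y - m) by rewrite subnKC // (leq_trans (leq_addr _ _) h1).
  have hx : n * m %/ P <= y - m <= (n * m + m.-1) %/ P.
    move: h1 h2; rewrite {1 2}hy; rewrite !leq_add2l => -> -> //.
  have := allrP hB (xwin _ hx); rewrite /DBz.
  case E: (mt 128 (d + (y - m)) (t v) (t v.+1)) => [u|] //.
  move=> /eqP /(@mt_ok 8) E2; move: E => /(@mt_ok 7) E1.
  have e2 : m + (y - m) + m = v * 2 ^ 8 + (d.*2 + (y - m)) by rewrite hmv; clear; lia.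
  have e1 : m + (y - m) = v * 2 ^ 7 + (d + (y - m)) by rewrite hmv; clear; lia.
  by rewrite hy e2 e1 E1 E2.
- exists l.-1, n; split; first by rewrite hup -/P; apply: slC.
  move=> y hy; apply: DAok; apply: (allrP hC); exact: xwin.
Qed.
End Sound.


Inductive cert := Leaf of nat & nat | Node of cert & cert.

Definition optk k n p1 q1 p2 q2 d b0 b1 :=
  (n < 200) &&
  match k with
  | 0 => (n.+1 * p2 < 37 * q2) && allr (n * p1 %/ q1) ((n.+1 * p2).-1 %/ q2) (DAz d b0 b1)
  | 1 => (n.+1 * p2 < 37 * q2) && allr (n.*2 * p1 %/ q1) ((n.+1.*2 * p2).-1 %/ q2) (DBz d b0 b1)
  | _ => (n < 127) && allr (n.*2 * p1 %/ q1) ((n.+1.*2 * p2).-1 %/ q2) (DAz d b0 b1)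
  end.

Lemma optk_opt k n p1 q1 p2 q2 d b0 b1 :
  optk k n p1 q1 p2 q2 d b0 b1 -> opt p1 q1 p2 q2 d b0 b1.
Proof.
case/andP=> hn H; apply/hasP; exists n; first by rewrite mem_iota.
by case: k H => [|[|k]] /andP [-> ->]; rewrite ?orbT.
Qed.

Fixpoint check c p1 q1 p2 q2 d b0 b1 : bool :=
  match c with
  | Leaf k n => optk k n p1 q1 p2 q2 d b0 b1
  | Node c1 c2 => check c1 p1 q1 (p1 + p2) (q1 + q2) d b0 b1 &&
                  check c2 (p1 + p2) (q1 + q2) p2 q2 d b0 b1
  end.

Lemma check_sound m v d c p1 q1 p2 q2 : m = v * 128 + d -> 256 <= 2 ^ up_log 2 m ->
  0 < q1 -> 0 < q2 ->
  p1 * 2 ^ up_log 2 m <= m * q1 -> m * q2 <= p2 * 2 ^ up_log 2 m ->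
  check c p1 q1 p2 q2 d (t v) (t v.+1) -> Goal m.
Proof.
move=> hmv hL.
elim: c p1 q1 p2 q2 => [k n|c1 IH1 c2 IH2] p1 q1 p2 q2 hq1 hq2 hlo hhi /=.
  by move/optk_opt; exact: (opt_sound hmv erefl hL).
case/andP => [h1 h2].
case: (leqP (m * (q1 + q2)) ((p1 + p2) * 2 ^ up_log 2 m)) => hmed.
  by apply: (IH1 p1 q1 (p1 + p2) (q1 + q2)) => //; rewrite addn_gt0 hq1.
by apply: (IH2 (p1 + p2) (q1 + q2) p2 q2) => //; [rewrite addn_gt0 hq1 | exact: ltnW].
Qed.
Definition certs : seq (nat * bool * bool * cert) := [::
  (3, false, false, (Leaf 0 0));
  (3, false, true, (Leaf 0 0));
  (3, true, false, (Leaf 1 0));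
  (3, true, true, (Leaf 1 0));
  (5, false, false, (Leaf 0 0));
  (5, false, true, (Leaf 0 0));
  (5, true, false, (Node (Leaf 0 2) (Node (Leaf 1 4) (Leaf 0 4))));
  (5, true, true, (Node (Leaf 0 2) (Node (Leaf 1 4) (Leaf 0 4))));
  (7, false, false, (Node (Leaf 0 2) (Leaf 0 5)));
  (7, false, true, (Node (Leaf 0 2) (Leaf 0 5)));
  (7, true, false, (Leaf 0 0));
  (7, true, true, (Leaf 0 0));
  (11, false, false, (Leaf 1 0));
  (11, false, true, (Leaf 1 0));
  (11, true, false, (Leaf 0 0));
  (11, true, true, (Leaf 0 0));
  (13, false, false, (Node (Leaf 0 2) (Node (Node (Node (Leaf 0 29) (Leaf 1 10)) (Leaf 0 7)) (Node (Leaf 1 4) (Node (Leaf 0 24) (Node (Leaf 0 6) (Node (Leaf 0 23) (Node (Leaf 1 8) (Node (Leaf 0 9) (Node (Leaf 1 5) (Node (Leaf 1 5) (Node (Leaf 2 12) (Node (Leaf 0 21) (Node (Leaf 0 14) (Node (Leaf 0 21) (Node (Leaf 2 16) (Node (Leaf 0 21) (Node (Leaf 1 9) (Node (Leaf 1 9) (Leaf 0 20))))))))))))))))))));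
  (13, false, true, (Node (Leaf 0 2) (Node (Node (Node (Leaf 0 29) (Leaf 1 10)) (Leaf 0 7)) (Node (Leaf 1 4) (Node (Leaf 0 24) (Node (Leaf 0 6) (Node (Leaf 0 23) (Node (Leaf 1 8) (Node (Leaf 0 9) (Node (Leaf 1 5) (Node (Leaf 1 5) (Node (Leaf 2 12) (Node (Leaf 0 21) (Node (Leaf 0 14) (Node (Leaf 0 21) (Node (Leaf 2 16) (Node (Leaf 0 21) (Node (Leaf 1 9) (Node (Leaf 1 9) (Leaf 0 20))))))))))))))))))));
  (13, true, false, (Leaf 0 0));
  (13, true, true, (Leaf 0 0));
  (15, false, false, (Leaf 0 0));
  (15, false, true, (Leaf 0 0));
  (15, true, false, (Leaf 1 0));
  (15, true, true, (Leaf 1 0));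
  (19, false, false, (Leaf 1 0));
  (19, false, true, (Leaf 1 0));
  (19, true, false, (Leaf 0 0));
  (19, true, true, (Leaf 0 0));
  (21, false, false, (Node (Leaf 0 2) (Node (Leaf 1 4) (Leaf 0 4))));
  (21, false, true, (Node (Leaf 0 2) (Node (Leaf 1 4) (Leaf 0 4))));
  (21, true, false, (Leaf 0 0));
  (21, true, true, (Leaf 0 0));
  (23, false, false, (Leaf 0 0));
  (23, false, true, (Leaf 0 0));
  (23, true, false, (Node (Leaf 0 2) (Leaf 0 5)));
  (23, true, true, (Node (Leaf 0 2) (Leaf 0 5)));
  (27, false, false, (Leaf 0 0));
  (27, false, true, (Leaf 0 0));
  (27, true, false, (Leaf 1 0));
  (27, true, true, (Leaf 1 0));
  (29, false, false, (Leaf 0 0));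
  (29, false, true, (Leaf 0 0));
  (29, true, false, (Node (Leaf 0 2) (Node (Leaf 1 4) (Leaf 0 4))));
  (29, true, true, (Node (Leaf 0 2) (Node (Leaf 1 4) (Leaf 0 4))));
  (31, false, false, (Node (Leaf 0 2) (Leaf 0 5)));
  (31, false, true, (Node (Leaf 0 2) (Leaf 0 5)));
  (31, true, false, (Leaf 0 0));
  (31, true, true, (Leaf 0 0));
  (35, false, false, (Leaf 1 0));
  (35, false, true, (Leaf 1 0));
  (35, true, false, (Leaf 0 0));
  (35, true, true, (Leaf 0 0));
  (37, false, false, (Node (Leaf 0 2) (Node (Leaf 1 4) (Leaf 0 4))));
  (37, false, true, (Node (Leaf 0 2) (Node (Leaf 1 4) (Leaf 0 4))));
  (37, true, false, (Leaf 0 0));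
  (37, true, true, (Leaf 0 0));
  (39, false, false, (Leaf 0 0));
  (39, false, true, (Leaf 0 0));
  (39, true, false, (Node (Leaf 0 2) (Leaf 0 5)));
  (39, true, true, (Node (Leaf 0 2) (Leaf 0 5)));
  (43, false, false, (Leaf 0 0));
  (43, false, true, (Leaf 0 0));
  (43, true, false, (Leaf 1 0));
  (43, true, true, (Leaf 1 0));
  (45, false, false, (Leaf 0 0));
  (45, false, true, (Leaf 0 0));
  (45, true, false, (Node (Leaf 0 2) (Node (Node (Leaf 1 13) (Leaf 0 7)) (Node (Leaf 1 4) (Node (Leaf 1 11) (Node (Leaf 0 6) (Node (Leaf 1 10) (Node (Leaf 1 8) (Node (Leaf 0 9) (Node (Leaf 1 5) (Node (Leaf 1 5) (Node (Leaf 1 12) (Node (Leaf 1 18) (Node (Leaf 0 14) (Node (Leaf 1 18) (Node (Leaf 1 16) (Node (Leaf 1 18) (Leaf 1 9))))))))))))))))));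
  (45, true, true, (Node (Leaf 0 2) (Node (Node (Leaf 1 13) (Leaf 0 7)) (Node (Leaf 1 4) (Node (Leaf 1 11) (Node (Leaf 0 6) (Node (Leaf 1 10) (Node (Leaf 1 8) (Node (Leaf 0 9) (Node (Leaf 1 5) (Node (Leaf 1 5) (Node (Leaf 1 12) (Node (Leaf 1 18) (Node (Leaf 0 14) (Node (Leaf 1 18) (Node (Leaf 1 16) (Node (Leaf 1 18) (Leaf 1 9))))))))))))))))));
  (47, false, false, (Leaf 1 0));
  (47, false, true, (Leaf 1 0));
  (47, true, false, (Leaf 0 0));
  (47, true, true, (Leaf 0 0));
  (51, false, false, (Leaf 0 0));
  (51, false, true, (Leaf 0 0));
  (51, true, false, (Leaf 1 0));
  (51, true, true, (Leaf 1 0));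
  (53, false, false, (Leaf 0 0));
  (53, false, true, (Leaf 0 0));
  (53, true, false, (Node (Leaf 0 2) (Node (Leaf 1 4) (Leaf 0 4))));
  (53, true, true, (Node (Leaf 0 2) (Node (Leaf 1 4) (Leaf 0 4))));
  (55, false, false, (Node (Leaf 0 2) (Leaf 0 5)));
  (55, false, true, (Node (Leaf 0 2) (Leaf 0 5)));
  (55, true, false, (Leaf 0 0));
  (55, true, true, (Leaf 0 0));
  (59, false, false, (Leaf 1 0));
  (59, false, true, (Leaf 1 0));
  (59, true, false, (Leaf 0 0));
  (59, true, true, (Leaf 0 0));
  (61, false, false, (Node (Leaf 0 2) (Node (Node (Leaf 1 13) (Leaf 0 7)) (Node (Leaf 1 4) (Node (Leaf 1 11) (Node (Leaf 0 6) (Node (Leaf 1 10) (Node (Leaf 1 8) (Node (Leaf 0 9) (Node (Leaf 1 5) (Node (Leaf 1 5) (Node (Leaf 1 12) (Node (Leaf 1 27) (Node (Leaf 0 14) (Node (Leaf 1 35) (Node (Leaf 1 16) (Node (Leaf 1 35) (Leaf 1 9))))))))))))))))));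
  (61, false, true, (Node (Leaf 0 2) (Node (Node (Leaf 1 13) (Leaf 0 7)) (Node (Leaf 1 4) (Node (Leaf 1 11) (Node (Leaf 0 6) (Node (Leaf 1 10) (Node (Leaf 1 8) (Node (Leaf 0 9) (Node (Leaf 1 5) (Node (Leaf 1 5) (Node (Leaf 1 12) (Node (Leaf 1 27) (Node (Leaf 0 14) (Node (Leaf 2 42) (Node (Leaf 1 16) (Node (Leaf 2 44) (Leaf 1 9))))))))))))))))));
  (61, true, false, (Leaf 0 0));
  (61, true, true, (Leaf 0 0));
  (63, false, false, (Leaf 0 0));
  (63, false, true, (Leaf 0 0));
  (63, true, false, (Leaf 1 0));
  (63, true, true, (Leaf 1 0));
  (67, false, false, (Leaf 1 0));
  (67, false, true, (Leaf 1 0));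
  (67, true, false, (Leaf 0 0));
  (67, true, true, (Leaf 0 0));
  (69, false, false, (Node (Leaf 0 2) (Node (Leaf 1 4) (Leaf 0 4))));
  (69, false, true, (Node (Leaf 0 2) (Node (Leaf 1 4) (Leaf 0 4))));
  (69, true, false, (Leaf 0 0));
  (69, true, true, (Leaf 0 0));
  (71, false, false, (Leaf 0 0));
  (71, false, true, (Leaf 0 0));
  (71, true, false, (Node (Leaf 0 2) (Leaf 0 5)));
  (71, true, true, (Node (Leaf 0 2) (Leaf 0 5)));
  (75, false, false, (Leaf 0 0));
  (75, false, true, (Leaf 0 0));
  (75, true, false, (Leaf 1 0));
  (75, true, true, (Leaf 1 0));
  (77, false, false, (Leaf 0 0));
  (77, false, true, (Leaf 0 0));
  (77, true, false, (Node (Leaf 0 2) (Node (Node (Node (Leaf 0 29) (Leaf 1 10)) (Leaf 0 7)) (Node (Leaf 1 4) (Node (Leaf 0 24) (Node (Leaf 0 6) (Node (Leaf 0 23) (Node (Leaf 1 8) (Node (Leaf 0 9) (Node (Leaf 1 5) (Node (Leaf 1 5) (Node (Leaf 2 12) (Node (Leaf 0 21) (Node (Leaf 0 14) (Node (Leaf 0 21) (Node (Leaf 2 16) (Node (Leaf 0 21) (Node (Leaf 1 9) (Node (Leaf 1 9) (Leaf 0 20))))))))))))))))))));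
  (77, true, true, (Node (Leaf 0 2) (Node (Node (Node (Leaf 0 29) (Leaf 1 10)) (Leaf 0 7)) (Node (Leaf 1 4) (Node (Leaf 0 24) (Node (Leaf 0 6) (Node (Leaf 0 23) (Node (Leaf 1 8) (Node (Leaf 0 9) (Node (Leaf 1 5) (Node (Leaf 1 5) (Node (Leaf 2 12) (Node (Leaf 0 21) (Node (Leaf 0 14) (Node (Leaf 0 21) (Node (Leaf 2 16) (Node (Leaf 0 21) (Node (Leaf 1 9) (Node (Leaf 1 9) (Leaf 0 20))))))))))))))))))));
  (79, false, false, (Leaf 1 0));
  (79, false, true, (Leaf 1 0));
  (79, true, false, (Leaf 0 0));
  (79, true, true, (Leaf 0 0));
  (83, false, false, (Leaf 0 0));
  (83, false, true, (Leaf 0 0));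
  (83, true, false, (Leaf 1 0));
  (83, true, true, (Leaf 1 0));
  (85, false, false, (Leaf 0 0));
  (85, false, true, (Leaf 0 0));
  (85, true, false, (Node (Leaf 0 2) (Node (Leaf 1 4) (Leaf 0 4))));
  (85, true, true, (Node (Leaf 0 2) (Node (Leaf 1 4) (Leaf 0 4))));
  (87, false, false, (Node (Leaf 0 2) (Leaf 0 5)));
  (87, false, true, (Node (Leaf 0 2) (Leaf 0 5)));
  (87, true, false, (Leaf 0 0));
  (87, true, true, (Leaf 0 0));
  (91, false, false, (Leaf 1 0));
  (91, false, true, (Leaf 1 0));
  (91, true, false, (Leaf 0 0));
  (91, true, true, (Leaf 0 0));
  (93, false, false, (Node (Leaf 0 2) (Node (Leaf 1 4) (Leaf 0 4))));
  (93, false, true, (Node (Leaf 0 2) (Node (Leaf 1 4) (Leaf 0 4))));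
  (93, true, false, (Leaf 0 0));
  (93, true, true, (Leaf 0 0));
  (95, false, false, (Leaf 0 0));
  (95, false, true, (Leaf 0 0));
  (95, true, false, (Node (Leaf 0 2) (Leaf 0 5)));
  (95, true, true, (Node (Leaf 0 2) (Leaf 0 5)));
  (99, false, false, (Leaf 0 0));
  (99, false, true, (Leaf 0 0));
  (99, true, false, (Leaf 1 0));
  (99, true, true, (Leaf 1 0));
  (101, false, false, (Leaf 0 0));
  (101, false, true, (Leaf 0 0));
  (101, true, false, (Node (Leaf 0 2) (Node (Leaf 1 4) (Leaf 0 4))));
  (101, true, true, (Node (Leaf 0 2) (Node (Leaf 1 4) (Leaf 0 4))));
  (103, false, false, (Node (Leaf 0 2) (Leaf 0 5)));
  (103, false, true, (Node (Leaf 0 2) (Leaf 0 5)));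
  (103, true, false, (Leaf 0 0));
  (103, true, true, (Leaf 0 0));
  (107, false, false, (Leaf 1 0));
  (107, false, true, (Leaf 1 0));
  (107, true, false, (Leaf 0 0));
  (107, true, true, (Leaf 0 0));
  (109, false, false, (Node (Leaf 0 2) (Node (Node (Leaf 1 13) (Leaf 0 7)) (Node (Leaf 1 4) (Node (Leaf 1 11) (Node (Leaf 0 6) (Node (Leaf 1 10) (Node (Leaf 1 8) (Node (Leaf 0 9) (Node (Leaf 1 5) (Node (Leaf 1 5) (Node (Leaf 1 12) (Node (Leaf 1 18) (Node (Leaf 0 14) (Node (Leaf 1 18) (Node (Leaf 1 16) (Node (Leaf 1 18) (Leaf 1 9))))))))))))))))));
  (109, false, true, (Node (Leaf 0 2) (Node (Node (Node (Leaf 0 29) (Leaf 1 10)) (Leaf 0 7)) (Node (Leaf 1 4) (Node (Leaf 0 24) (Node (Leaf 0 6) (Node (Leaf 0 23) (Node (Leaf 1 8) (Node (Leaf 0 9) (Node (Leaf 1 5) (Node (Leaf 1 5) (Node (Leaf 2 12) (Node (Leaf 0 21) (Node (Leaf 0 14) (Node (Leaf 0 21) (Node (Leaf 2 16) (Node (Leaf 0 21) (Node (Leaf 1 9) (Node (Leaf 1 9) (Leaf 0 20))))))))))))))))))));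
  (109, true, false, (Leaf 0 0));
  (109, true, true, (Leaf 0 0));
  (111, false, false, (Leaf 0 0));
  (111, false, true, (Leaf 0 0));
  (111, true, false, (Leaf 1 0));
  (111, true, true, (Leaf 1 0));
  (115, false, false, (Leaf 1 0));
  (115, false, true, (Leaf 1 0));
  (115, true, false, (Leaf 0 0));
  (115, true, true, (Leaf 0 0));
  (117, false, false, (Node (Leaf 0 2) (Node (Leaf 1 4) (Leaf 0 4))));
  (117, false, true, (Node (Leaf 0 2) (Node (Leaf 1 4) (Leaf 0 4))));
  (117, true, false, (Leaf 0 0));
  (117, true, true, (Leaf 0 0));
  (119, false, false, (Leaf 0 0));
  (119, false, true, (Leaf 0 0));
  (119, true, false, (Node (Leaf 0 2) (Leaf 0 5)));
  (119, true, true, (Node (Leaf 0 2) (Leaf 0 5)));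
  (123, false, false, (Leaf 0 0));
  (123, false, true, (Leaf 0 0));
  (123, true, false, (Leaf 1 0));
  (123, true, true, (Leaf 1 0));
  (125, false, false, (Leaf 0 0));
  (125, false, true, (Leaf 0 0));
  (125, true, false, (Node (Leaf 0 2) (Node (Leaf 1 4) (Leaf 0 4))));
  (125, true, true, (Node (Leaf 0 2) (Node (Node (Leaf 1 13) (Leaf 0 7)) (Node (Leaf 1 4) (Node (Leaf 1 11) (Node (Leaf 0 6) (Node (Leaf 1 10) (Node (Leaf 1 8) (Node (Leaf 0 9) (Node (Leaf 1 5) (Node (Leaf 1 5) (Node (Leaf 1 12) (Node (Leaf 1 27) (Node (Leaf 0 14) (Node (Leaf 1 35) (Node (Leaf 1 16) (Node (Leaf 1 35) (Leaf 1 9))))))))))))))))));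
  (127, false, false, (Leaf 1 0));
  (127, false, true, (Node (Leaf 0 2) (Leaf 0 5)));
  (127, true, false, (Leaf 0 0));
  (127, true, true, (Leaf 0 0))].

Definition classes_ok := all (fun d => (odd d && (d %% 8 != 1)) ==>
  all (fun b0 => all (fun b1 =>
    has (fun x => match x with (d', b0', b1', c) =>
       (d' == d) && (b0' == b0) && (b1' == b1) && check c 1 2 1 1 d b0 b1 end) certs)
  [:: false; true]) [:: false; true]) (iota 0 128).

Lemma classes_ok_true : classes_ok = true.
Proof. vm_compute. reflexivity. Qed.

Definition entry_ok (x : nat * nat * nat) :=
  let: (m, e, n) := x in
  ((n.+1 + 2 ^ e) * m < (m + 37) * 2 ^ up_log 2 m) &&
  allr (n * m %/ 2 ^ e) ((n * m + m.-1) %/ 2 ^ e) (fun y => t (y + m) == t y).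

Lemma entry_sound m e n : entry_ok (m, e, n) -> Goal m.
Proof.
case/andP => hs ha; exists e, n; split => // y hy.
by apply/eqP; apply: (allrP ha).
Qed.
Definition small_tab : seq (nat * nat * nat) := [:: (3, 2, 0); (5, 3, 0); (7, 2, 2); (11, 4, 3); (13, 4, 10); (15, 4, 0); (19, 5, 4); (21, 5, 2); (23, 5, 0); (27, 5, 0); (29, 5, 0); (31, 4, 2); (35, 6, 4); (37, 6, 2); (39, 6, 0); (43, 6, 0); (45, 6, 0); (47, 6, 3); (51, 6, 0); (53, 6, 0); (55, 5, 2); (59, 5, 6); (61, 5, 41); (63, 6, 0); (67, 7, 4); (69, 7, 2); (71, 7, 0); (75, 7, 0); (77, 7, 0); (79, 7, 10); (83, 7, 0); (85, 7, 0); (87, 6, 3); (91, 7, 3); (93, 7, 5); (95, 7, 0); (99, 7, 0); (101, 7, 0); (103, 6, 2); (107, 7, 10); (109, 7, 6); (111, 7, 0); (115, 6, 9); (117, 7, 4); (119, 7, 0); (123, 7, 0); (125, 7, 0); (127, 6, 2)].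

Definition small_ok := all (fun m => (odd m && (m %% 8 != 1) && (1 < m)) ==>
  has (fun x => (x.1.1 == m) && entry_ok x) small_tab) (iota 0 128).

Lemma small_ok_true : small_ok = true.
Proof. vm_compute. reflexivity. Qed.

Lemma has_ex (T : Type) (a : pred T) s : has a s -> exists x, a x.
Proof. by elim: s => //= x s IH /orP [h|/IH]; [exists x|]. Qed.

Theorem lemma5 (m : nat) :
  odd m -> m %% 8 != 1 ->
  exists k, is_frakK m k /\ k * m < (m + 37) * 2 ^ up_log 2 m.
Proof.
move=> hodd h8.
have hm1 : 1 < m by case: m hodd h8 => [|[|m]].
apply: goal_concl; first by lia.
case: (ltnP m 128) => hsmall.
  have hmi : m \in iota 0 128 by rewrite mem_iota.
  have := small_ok_true; rewrite /small_ok => /allP /(_ m hmi) /implyP.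
  rewrite hodd h8 hm1 => /(_ isT) /hasP [[[m' e] n] _ /andP [/eqP hm' he]].
  simpl in hm'; by subst m'; apply: entry_sound he.
set d := m %% 128; set v := m %/ 128.
have hmv : m = v * 128 + d by rewrite /v /d -divn_eq.
have hd : d < 128 by rewrite /d ltn_mod.
have hd8 : d %% 8 = m %% 8 by rewrite /d modn_dvdm.
have hdo : odd d by move: hodd; rewrite hmv oddD oddM /= andbF.
have [hlo hhi] : 2 ^ (up_log 2 m).-1 < m /\ m <= 2 ^ up_log 2 m.
  by have /andP[] := up_log_bounds (isT : 1 < 2) hm1.
move: hlo hhi; set l := up_log 2 m => hlo hhi.
have hm129 : 128 < m.
  rewrite ltn_neqAle hsmall andbT; apply/eqP => h; by rewrite -h in hodd.
have hl : 7 < l.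
  have h7 : 2 ^ 7 < 2 ^ l by rewrite (_ : 2 ^ 7 = 128) // (leq_trans hm129 hhi).
  by rewrite ltn_exp2l in h7.
have hL : 256 <= 2 ^ l by rewrite (_ : 256 = 2 ^ 8) // leq_exp2l.
have hLP : 2 ^ l = (2 ^ l.-1).*2 by rewrite -mul2n -expnS prednK // (leq_trans _ hl).
have hdi : d \in iota 0 128 by rewrite mem_iota.
have := classes_ok_true; rewrite /classes_ok => /allP /(_ d hdi) /implyP.
rewrite hdo hd8 h8 => /(_ isT).
have Hb : forall b : bool, b \in [:: false; true] by case.
move=> /allP /(_ (t v) (Hb _)) /allP /(_ (t v.+1) (Hb _)).
case/has_ex => [[[[d' b0'] b1'] c] /andP [/andP [/andP [_ /eqP hb0] /eqP hb1] hc]].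
apply: (check_sound hmv hL _ _ _ _ hc) => //.
  rewrite mul1n -/l hLP; lia.
by rewrite mul1n muln1.
Qed.
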